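(* Let $G=(V,E,w)$ be a connected weighted graph with $n$ vertices, and let $k\in\mathbb{R}$. Then $$ \sum_{\{s,t\}\subseteq V}\big(H^{(2k-1)}_{st}\big)^{2}=n\cdot\sum_{e\in E}w_e\cdot\big(H^{(2k)}_{e}\big)^{2}, $$ where the left sum is over unordered pairs of distinct vertices.
   Context: $G=(V,E,w)$ is undirected with positive edge weights $w_e$ and graph Laplacian $L=D-A$ (weighted degree matrix minus weighted adjacency matrix), with spectral decomposition $L=\sum_i\lambda_ix_ix_i^{T}$. For $k\in\mathbb{R}$, $(L^{+})^{k}:=\sum_{i:\lambda_i>0}\lambda_i^{-k}x_ix_i^{T}$. With $1_v$ the indicator vector of vertex $v$, the $k$-harmonic distance is $H^{(k)}_{st}=\sqrt{(1_s-1_t)^{T}(L^{+})^{k}(1_s-1_t)}$, and $H^{(k)}_e:=H^{(k)}_{st}$ for an edge $e=\{s,t\}$. *)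

(* Defs.v *)
From HB Require Import structures.
From mathcomp Require Import all_boot all_order all_algebra.
From mathcomp Require Import reals exp.
Set Implicit Arguments. Unset Strict Implicit. Unset Printing Implicit Defensive.
Import Order.TTheory GRing.Theory Num.Theory.
Local Open Scope ring_scope.

(* Weighted graph on vertex set 'I_n given by a weight function w;
   {s,t} is an edge iff 0 < w s t. *)
Definition edge_rel (R : realType) (n : nat) (w : 'I_n -> 'I_n -> R) : rel 'I_n :=
  fun i j => 0 < w i j.

Definition laplacian (R : realType) (n : nat) (w : 'I_n -> 'I_n -> R) : 'M[R]_n :=
  \matrix_(i, j) ((i == j)%:R * (\sum_(l < n) w i l) - w i j).

Definition spectral_decomp (R : realType) (n : nat) (L U : 'M[R]_n) (lam : 'I_n -> R) :=
  U^T *m U = 1%:M /\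
  L = \sum_(i < n) lam i *: (col i U *m (col i U)^T).

Definition pinv_pow (R : realType) (n : nat) (U : 'M[R]_n) (lam : 'I_n -> R) (k : R)
  : 'M[R]_n :=
  \sum_(i < n | 0 < lam i) (lam i `^ (- k)) *: (col i U *m (col i U)^T).

Definition indic_diff (R : realType) (n : nat) (s t : 'I_n) : 'cV[R]_n :=
  \col_j ((j == s)%:R - (j == t)%:R).

Definition harm_dist (R : realType) (n : nat) (U : 'M[R]_n) (lam : 'I_n -> R) (k : R)
  (s t : 'I_n) : R :=
  Num.sqrt ((((indic_diff R s t)^T *m pinv_pow U lam k *m indic_diff R s t)) 0 0).

(* Main.v *)
Require Import Defs.
From HB Require Import structures.
From mathcomp Require Import all_boot all_order all_algebra.
From mathcomp Require Import reals exp ring lra.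
Import Order.TTheory GRing.Theory Num.Theory.
Local Open Scope ring_scope.

Lemma sum_indic (R : realType) n (f : 'I_n -> R) s :
  \sum_j (j == s)%:R * f j = f s.
Proof.
rewrite (bigD1 s) //= eqxx mul1r big1 ?addr0 // => j /negbTE ->; by rewrite mul0r.
Qed.

Lemma quad1 (R : realType) n (s t : 'I_n) (x : 'cV[R]_n) :
  ((indic_diff R s t)^T *m (x *m x^T) *m indic_diff R s t) 0 0 = (x s 0 - x t 0)^+2.
Proof.
rewrite mulmxA -[(indic_diff R s t)^T *m x *m x^T *m _]mulmxA.
have -> : x^T *m indic_diff R s t = ((indic_diff R s t)^T *m x)^T by rewrite trmx_mul trmxK.
rewrite mxE big_ord1 !mxE.
have -> : \sum_j (indic_diff R s t)^T 0 j * x j 0 = x s 0 - x t 0.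
  under eq_bigr do rewrite !mxE mulrBl.
  by rewrite sumrB !sum_indic.
by rewrite expr2.
Qed.

Lemma quad_sum (R : realType) n (s t : 'I_n) (I : finType) (P : pred I) (c : I -> R) (M : I -> 'M[R]_n) :
  ((indic_diff R s t)^T *m (\sum_(i | P i) c i *: M i) *m indic_diff R s t) 0 0 =
  \sum_(i | P i) c i * ((indic_diff R s t)^T *m M i *m indic_diff R s t) 0 0.
Proof.
rewrite mulmx_sumr mulmx_suml summxE; apply: eq_bigr => i _.
by rewrite -scalemxAr -scalemxAl mxE.
Qed.


Lemma hd2 (R : realType) n (U : 'M[R]_n) lam k s t :
  harm_dist U lam k s t ^+ 2 = \sum_(i | 0 < lam i) lam i `^ (- k) * (U s i - U t i)^+2.
Proof.
have E : ((indic_diff R s t)^T *m pinv_pow U lam k *m indic_diff R s t) 0 0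
   = \sum_(i | 0 < lam i) lam i `^ (- k) * (U s i - U t i)^+2.
  rewrite /pinv_pow quad_sum; apply: eq_bigr => i _; by rewrite quad1 !mxE.
rewrite /harm_dist E sqr_sqrtr //.
by apply: sumr_ge0 => i _; rewrite mulr_ge0 ?powR_ge0 ?sqr_ge0.
Qed.

Lemma halve (R : realType) n (f : 'I_n -> 'I_n -> R) :
  (forall s t, f s t = f t s) -> (forall s, f s s = 0) ->
  \sum_s \sum_t f s t = 2 * \sum_(s < n) \sum_(t < n | (s < t)%N) f s t.
Proof.
move=> fs f0.
have -> : \sum_s \sum_t f s t = \sum_(s < n) \sum_(t < n) (if (s < t)%N then f s t else 0)
   + \sum_(s < n) \sum_(t < n) (if (t < s)%N then f s t else 0).
  rewrite -big_split; apply: eq_bigr => s _; rewrite -big_split; apply: eq_bigr => t _ /=.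
  case: ltngtP => [h|h|h] /=; rewrite ?addr0 ?add0r //.
  by rewrite (ord_inj h) f0 ?addr0.
rewrite [X in _ + X]exchange_big /=.
have -> : \sum_(t < n) \sum_(s < n) (if (t < s)%N then f s t else 0) = \sum_(s < n) \sum_(t < n) (if (s < t)%N then f s t else 0).
  by apply: eq_bigr => s _; apply: eq_bigr => t _; rewrite fs.
have -> : \sum_(s < n) \sum_(t < n) (if (s < t)%N then f s t else 0) = \sum_(s < n) \sum_(t < n | (s < t)%N) f s t.
  apply: eq_bigr => s _. by rewrite [RHS]big_mkcond.
ring.
Qed.

Lemma orth (R : realType) n (U : 'M[R]_n) i j : U^T *m U = 1%:M ->
  \sum_s U s i * U s j = (i == j)%:R.
Proof.
move=> /(congr1 (fun M : 'M[R]_n => M i j)); rewrite !mxE => <-.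
by apply: eq_bigr => s _; rewrite mxE.
Qed.

Lemma Lentry (R : realType) n (L U : 'M[R]_n) lam s t :
  L = \sum_(i < n) lam i *: (col i U *m (col i U)^T) ->
  L s t = \sum_j lam j * (U s j * U t j).
Proof.
move=> ->; rewrite summxE; apply: eq_bigr => j _.
by rewrite !mxE big_ord1 !mxE.
Qed.

Arguments Lentry {R n L U lam s t}.
Arguments orth {R n U i j}.

Lemma sum_indic' (R : realType) n (f : 'I_n -> R) s :
  \sum_j (s == j)%:R * f j = f s.
Proof. by under eq_bigr do rewrite eq_sym; rewrite sum_indic. Qed.

Lemma quadL (R : realType) n (L U : 'M[R]_n) lam i :
  spectral_decomp L U lam ->
  \sum_s \sum_t U s i * L s t * U t i = lam i.
Proof.
move=> [hO hL].
under eq_bigr do under eq_bigr do rewrite (Lentry hL) mulr_sumr mulr_suml.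
under eq_bigr do rewrite exchange_big /=.
rewrite exchange_big /=.
transitivity (\sum_(j < n) lam j * (\sum_s U s i * U s j) * (\sum_t U t j * U t i)).
  apply: eq_bigr => j _; rewrite -mulrA big_distrlr /= mulr_sumr; apply: eq_bigr => s _.
  rewrite mulr_sumr; apply: eq_bigr => t _; ring.
rewrite -[RHS](sum_indic' _ _ (fun j => lam j) i); apply: eq_bigr => j _.
rewrite (orth hO) (eq_bigr (fun t => U t i * U t j)); last by move=> *; rewrite mulrC.
rewrite (orth hO); case: eqP => _ /=; rewrite ?mul1r ?mulr1 ?mul0r ?mulr0 //.
Qed.

Lemma lapQ (R : realType) n (w : 'I_n -> 'I_n -> R) (a : 'I_n -> R) :
  (forall i j, w i j = w j i) ->
  \sum_s \sum_t w s t * (a s - a t)^+2 = 2 * \sum_s \sum_t a s * laplacian w s t * a t.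
Proof.
move=> ws.
set D := \sum_s a s ^+ 2 * \sum_l w s l.
set X := \sum_s \sum_t w s t * (a s * a t).
have E1 : \sum_s \sum_t a s * laplacian w s t * a t = D - X.
  rewrite /D /X -sumrB; apply: eq_bigr => s _.
  transitivity (\sum_t ((s == t)%:R * (a s * (\sum_l w s l) * a t) - w s t * (a s * a t))).
    by apply: eq_bigr => t _; rewrite mxE; ring.
  by rewrite sumrB sum_indic' expr2; congr (_ - _); ring.
have E2 : \sum_s \sum_t w s t * a s ^+ 2 = D.
  by apply: eq_bigr => s _; rewrite mulr_sumr; apply: eq_bigr => t _; exact: mulrC.
have E3 : \sum_s \sum_t w s t * a t ^+ 2 = D.
  rewrite exchange_big /=; apply: eq_bigr => s _; rewrite mulr_sumr.
  by apply: eq_bigr => t _; rewrite ws mulrC.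
rewrite E1.
transitivity (\sum_s \sum_t w s t * a s ^+ 2 + \sum_s \sum_t w s t * a t ^+ 2 - 2 * X).
  rewrite /X mulr_sumr -big_split -sumrB /=; apply: eq_bigr => s _.
  rewrite mulr_sumr -big_split -sumrB /=; apply: eq_bigr => t _; ring.
rewrite E2 E3; ring.
Qed.

Lemma colL0 (R : realType) n (w : 'I_n -> 'I_n -> R) t :
  (forall i j, w i j = w j i) -> \sum_s laplacian w s t = 0.
Proof.
move=> ws.
under eq_bigr do rewrite mxE.
rewrite sumrB (eq_bigr (fun s => (t == s)%:R * \sum_l w s l)); last first.
  by move=> s _; rewrite eq_sym.
rewrite sum_indic'; apply/eqP; rewrite subr_eq0; apply/eqP; apply: eq_bigr => s _; exact: ws.
Qed.

Lemma colsum0 (R : realType) n (w : 'I_n -> 'I_n -> R) U lam i :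
  (forall i j, w i j = w j i) -> spectral_decomp (laplacian w) U lam ->
  0 < lam i -> \sum_s U s i = 0.
Proof.
move=> ws [hO hL] hi.
have : \sum_t (\sum_s laplacian w s t) * U t i = lam i * \sum_s U s i.
  under eq_bigr do rewrite mulr_suml.
  under eq_bigr do under eq_bigr do rewrite (Lentry hL) mulr_suml.
  under eq_bigr do rewrite exchange_big /=.
  rewrite exchange_big /=.
  transitivity (\sum_(j < n) lam j * (\sum_s U s j) * (\sum_t U t j * U t i)).
    apply: eq_bigr => j _; rewrite -mulrA big_distrlr /= exchange_big mulr_sumr; apply: eq_bigr => t _.
    rewrite mulr_sumr; apply: eq_bigr => s _; ring.
  rewrite -[RHS](sum_indic' _ _ (fun j => lam j * \sum_s U s j) i); apply: eq_bigr => j _.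
  rewrite (orth hO) [(j == i)]eq_sym; case: (i == j) => /=; rewrite ?mul1r ?mulr1 ?mul0r ?mulr0 //.
rewrite big1; last by move=> t _; rewrite colL0 // mul0r.
move=> /esym /eqP; rewrite mulf_eq0 => /orP [/eqP h|/eqP //].
by move: hi; rewrite h ltxx.
Qed.

Arguments orth {R n U i j}.
Arguments halve {R n}.
Arguments colsum0 {R n w U lam i} _ _ _.
Arguments lapQ {R n w} a _.
Arguments quadL {R n L U lam} i _.

Lemma fullsq (R : realType) n (a : 'I_n -> R) :
  \sum_(s < n) \sum_(t < n) (a s - a t)^+2 =
  2 * (n%:R * \sum_s a s ^+ 2 - (\sum_s a s)^+2).
Proof.
set S2 := \sum_s a s ^+ 2. set S1 := \sum_s a s.
transitivity (\sum_(s < n) \sum_(t < n) (a s ^+ 2 + a t ^+ 2) - 2 * \sum_(s < n) \sum_(t < n) a s * a t).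
  rewrite mulr_sumr -sumrB; apply: eq_bigr => s _.
  rewrite mulr_sumr -sumrB; apply: eq_bigr => t _; ring.
have -> : \sum_(s < n) \sum_(t < n) a s * a t = S1 ^+ 2.
  by rewrite expr2 big_distrlr.
have -> : \sum_(s < n) \sum_(t < n) (a s ^+ 2 + a t ^+ 2) = n%:R * S2 + n%:R * S2.
  under eq_bigr do rewrite big_split /=. rewrite big_split /=.
  have -> : \sum_(s < n) \sum_(t < n) a s ^+ 2 = n%:R * S2.
    rewrite /S2 mulr_sumr; apply: eq_bigr => s _.
    by rewrite sumr_const card_ord mulr_natl.
  by rewrite sumr_const card_ord mulr_natl.
ring.
Qed.

Theorem theorem6p3 (R : realType) (n : nat) (w : 'I_n -> 'I_n -> R)
  (U : 'M[R]_n) (lam : 'I_n -> R) (k : R) :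
  (forall i j, 0 <= w i j) ->
  (forall i j, w i j = w j i) ->
  (forall i, w i i = 0) ->
  (forall s t : 'I_n, connect (edge_rel w) s t) ->
  spectral_decomp (laplacian w) U lam ->
  \sum_(s < n) \sum_(t < n | (s < t)%N) (harm_dist U lam (2 * k - 1) s t) ^+ 2
  = n%:R * \sum_(s < n) \sum_(t < n | ((s < t)%N && edge_rel w s t))
             w s t * (harm_dist U lam (2 * k) s t) ^+ 2.
Proof.
move=> w0 ws wd _ hS.
have hO := hS.1.
have pL : forall i, 0 < lam i -> \sum_(s < n) \sum_(t < n | (s < t)%N) (U s i - U t i)^+2 = n%:R.
  move=> i hi.
  have H := halve (fun s t => (U s i - U t i)^+2).
  rewrite fullsq in H.
  have S2 : \sum_s U s i ^+ 2 = 1.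
    by rewrite (eq_bigr (fun s => U s i * U s i)) ?(orth hO) ?eqxx // => s _; rewrite expr2.
  rewrite S2 (colsum0 ws hS hi) in H.
  have := H (fun s t => ltac:(ring)) (fun s => ltac:(ring)).
  move=> H'; lra.
have pR : forall i, 0 < lam i -> \sum_(s < n) \sum_(t < n | (s < t)%N && edge_rel w s t)
     w s t * (U s i - U t i)^+2 = lam i.
  move=> i hi.
  have -> : \sum_(s < n) \sum_(t < n | (s < t)%N && edge_rel w s t) w s t * (U s i - U t i)^+2
     = \sum_(s < n) \sum_(t < n | (s < t)%N) w s t * (U s i - U t i)^+2.
    apply: eq_bigr => s _; rewrite [LHS]big_mkcond [RHS]big_mkcond; apply: eq_bigr => t _.
    case: (s < t)%N => //=; rewrite /edge_rel; case: ltP => //= h.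
    have -> : w s t = 0 by apply/eqP; rewrite eq_le h w0.
    by rewrite mul0r.
  have H := halve (fun s t => w s t * (U s i - U t i)^+2).
  rewrite lapQ // (quadL i hS) in H.
  have := H (fun s t => ltac:(rewrite ws; ring)) (fun s => ltac:(rewrite wd; ring)).
  move=> H'; lra.
under eq_bigr do under eq_bigr do rewrite hd2.
under eq_bigr do rewrite exchange_big /=.
rewrite exchange_big /=.
under [in RHS]eq_bigr do under eq_bigr do rewrite hd2 mulr_sumr.
under [in RHS]eq_bigr do rewrite exchange_big /=.
rewrite [in RHS]exchange_big /=.
rewrite mulr_sumr; apply: eq_bigr => i hi.
have -> : \sum_(s < n) \sum_(t < n | (s < t)%N) lam i `^ (- (2 * k - 1)) * (U s i - U t i) ^+ 2
   = lam i `^ (- (2 * k - 1)) * n%:R.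
  by rewrite -(pL i hi) mulr_sumr; apply: eq_bigr => s _; rewrite mulr_sumr.
have -> : \sum_(s < n) \sum_(t < n | (s < t)%N && edge_rel w s t)
     w s t * (lam i `^ (- (2 * k)) * (U s i - U t i) ^+ 2)
   = lam i `^ (- (2 * k)) * lam i.
  rewrite -(pR i hi) mulr_sumr; apply: eq_bigr => s _; rewrite mulr_sumr.
  by apply: eq_bigr => t _; ring.
have -> : - (2 * k - 1) = - (2 * k) + 1 by ring.
rewrite powRD; last by rewrite (gt_eqF hi) /= implybT.
rewrite powRr1; last exact: ltW.
ring.
Qed.
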